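(* Let $\mathcal{R}$ be any resolute voting rule. Every $2$-by-$2$ GS-game under $\mathcal{R}$ has at least one Nash equilibrium in pure strategies.
   Context: Voters have strict linear orders over a finite candidate set $C$; $\mathcal{R}$ maps each preference profile to a winning candidate. $(V_{-i},v_i')$ is $V$ with $v_i$ replaced by $v_i'$. A GS-manipulation of voter $i$ at profile $V$ is a vote $v_i'$ such that $i$ strictly prefers $\mathcal{R}(V_{-i},v_i')$ to $\mathcal{R}(V)$ and for every vote $v_i''$ either $\mathcal{R}(V_{-i},v_i'')=\mathcal{R}(V_{-i},v_i')$ or $i$ strictly prefers $\mathcal{R}(V_{-i},v_i')$ to $\mathcal{R}(V_{-i},v_i'')$; $i$ is a GS-manipulator if he has one. A GS-game for $V$: players are all GS-manipulators at $V$; player $i$'s action set consists of his sincere vote $v_i$ and a subset of his GS-manipulations; other voters vote sincerely; each player compares action profiles by his preference over the resulting winners. A $2$-by-$2$ GS-game is one with exactly two players, each having exactly two actions (his sincere vote and one GS-manipulation). A pure Nash equilibrium is an action profile at which no player can switch to his other action and obtain a winner he strictly prefers. *)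

(* Defs.v *)
From mathcomp Require Import all_boot.
Set Implicit Arguments. Unset Strict Implicit. Unset Printing Implicit Defensive.

(* A strict linear order on the candidate set C: r a b means "a is strictly preferred to b". *)
Definition strict_linear (C : finType) (r : rel C) : Prop :=
  irreflexive r /\ transitive r /\ (forall a b : C, a != b -> r a b || r b a).

Record vote (C : finType) := Vote { pref :> rel C; pref_linear : strict_linear pref }.

Definition profile (n : nat) (C : finType) := 'I_n -> vote C.

Definition rule (n : nat) (C : finType) := profile n C -> C.

Definition upd (n : nat) (C : finType) (V : profile n C) (i : 'I_n) (v : vote C)
  : profile n C := fun j => if j == i then v else V j.

Definition GS_manipulation (n : nat) (C : finType) (R : rule n C) (V : profile n C)
  (i : 'I_n) (v' : vote C) : Prop :=
  V i (R (upd V i v')) (R V) /\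
  forall v'' : vote C,
    R (upd V i v'') = R (upd V i v') \/ V i (R (upd V i v')) (R (upd V i v'')).

Definition GS_manipulator (n : nat) (C : finType) (R : rule n C) (V : profile n C)
  (i : 'I_n) : Prop := exists v', GS_manipulation R V i v'.

(* Outcome of the 2-by-2 GS-game with players i, j whose actions are
   sincere (false) or the designated GS-manipulation ai / aj (true). *)
Definition game2_outcome (n : nat) (C : finType) (R : rule n C) (V : profile n C)
  (i j : 'I_n) (ai aj : vote C) (x y : bool) : C :=
  R (upd (upd V i (if x then ai else V i)) j (if y then aj else V j)).

Definition game2_pure_NE (n : nat) (C : finType) (R : rule n C) (V : profile n C)
  (i j : 'I_n) (ai aj : vote C) (x y : bool) : Prop :=
  ~ V i (game2_outcome R V i j ai aj (~~ x) y) (game2_outcome R V i j ai aj x y) /\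
  ~ V j (game2_outcome R V i j ai aj x (~~ y)) (game2_outcome R V i j ai aj x y).

(* Main.v *)
Require Import Defs.
From mathcomp Require Import all_boot.
From Stdlib Require Import FunctionalExtensionality.

Lemma upd_same (n : nat) (C : finType) (V : profile n C) (k : 'I_n) :
  upd V k (V k) = V.
Proof.
apply: functional_extensionality => j'; rewrite /upd.
by case: eqP => [->|].
Qed.

Lemma upd_other (n : nat) (C : finType) (V : profile n C) (i j : 'I_n) (a : vote C) :
  i != j -> upd (upd V i a) j (V j) = upd V i a.
Proof.
move=> ij; have -> : V j = upd V i a j by rewrite /upd eq_sym (negbTE ij).
exact: upd_same.
Qed.

Lemma asym (C : finType) (v : vote C) a b : v a b -> ~ v b a.
Proof.
case: v => r [irr [tr _]] /= hab hba.
by have := irr a; rewrite (tr _ _ _ hab hba).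
Qed.

Theorem mainTheorem7 (n : nat) (C : finType) (R : rule n C) (V : profile n C)
  (i j : 'I_n) (ai aj : vote C) :
  i != j ->
  (forall k : 'I_n, GS_manipulator R V k <-> (k = i \/ k = j)) ->
  GS_manipulation R V i ai ->
  GS_manipulation R V j aj ->
  exists x y : bool, game2_pure_NE R V i j ai aj x y.
Proof.
move=> ij _ [Hi _] [Hj _].
have E00 : game2_outcome R V i j ai aj false false = R V.
  by rewrite /game2_outcome /= upd_same upd_same.
have E10 : game2_outcome R V i j ai aj true false = R (upd V i ai).
  by rewrite /game2_outcome /= upd_other.
have E01 : game2_outcome R V i j ai aj false true = R (upd V j aj).
  by rewrite /game2_outcome /= upd_same.
set o11 := game2_outcome R V i j ai aj true true.
case Hb1: (V j o11 (R (upd V i ai))).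
- case Hb2: (V i o11 (R (upd V j aj))).
  + exists true, true; split => /=.
    * rewrite E01; exact: asym.
    * rewrite E10; exact: asym.
  + exists false, true; split => /=.
    * by rewrite -/o11 E01 Hb2.
    * rewrite E00 E01; exact: asym.
- exists true, false; split => /=.
  + rewrite E00 E10; exact: asym.
  + by rewrite -/o11 E10 Hb1.
Qed.
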